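(* Let $p,q$ be language models over a finite non-empty alphabet $\Sigma$ with $\mathrm{KL}(p\|q)<\infty$ and with $q(y)=0$ whenever $p(y)=0$. For $Y\sim p$ let $f(Y)=\log\frac{p(Y)}{q(Y)}$ and $g(Y)=\frac{q(Y)}{p(Y)}$. Then $\mathrm{Cov}(f(Y),g(Y))=0$ if and only if $p=q$.
   Context: Language models are probability distributions over $\Sigma^*$; $\mathrm{KL}(p\|q)=\sum_y p(y)\log\frac{p(y)}{q(y)}$, natural log, $0\log 0=0$. *)

(* Defs.v *)
From HB Require Import structures.
From mathcomp Require Import all_boot all_order all_algebra.
From mathcomp Require Import all_classical all_reals all_analysis.
Set Implicit Arguments. Unset Strict Implicit. Unset Printing Implicit Defensive.
Import Order.TTheory GRing.Theory Num.Theory.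
Local Open Scope classical_set_scope.
Local Open Scope ring_scope.

(* Strings over the alphabet S are [seq S]; Sigma^* = [set: seq S]. *)

Definition ssum (R : realType) (T : choiceType) (D : set T) (t : T -> \bar R)
  : \bar R := (\esum_(x in D) t^\+ x - \esum_(x in D) t^\- x)%E.

Definition language_model (R : realType) (S : finType) (p : seq S -> R) : Prop :=
  (forall y, 0 <= p y) /\ (\esum_(y in [set: seq S]) (p y)%:E = 1)%E.

Definition kl_term (R : realType) (S : finType) (p q : seq S -> R) (y : seq S)
  : \bar R :=
  if p y == 0 then 0%E
  else if q y == 0 then +oo%E
  else (p y * ln (p y / q y))%:E.

Definition KL (R : realType) (S : finType) (p q : seq S -> R) : \bar R :=
  ssum [set: seq S] (kl_term p q).

Definition expect (R : realType) (S : finType) (p : seq S -> R) (h : seq S -> R)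
  : \bar R :=
  ssum [set y | 0 < p y] (fun y => (p y * h y)%:E).

Definition cov (R : realType) (S : finType) (p : seq S -> R) (f g : seq S -> R)
  : \bar R :=
  (expect p (fun y => (f y * g y)%R) - expect p f * expect p g)%E.

(* Main.v *)
Require Import Defs.
From HB Require Import structures.
From mathcomp Require Import all_boot all_order all_algebra.
From mathcomp Require Import all_classical all_reals all_analysis.
From mathcomp Require Import ring lra.
Import Order.TTheory GRing.Theory Num.Theory.
Local Open Scope classical_set_scope.
Local Open Scope ring_scope.

Section H.
Variable R : realType.

Definition pos (r : R) := Num.max r 0.

Lemma posE r : pos r - pos (- r) = r.
Proof. rewrite /pos !maxEle; case: (leP r 0) => h; case: (leP (-r) 0) => h1; lra. Qed.

Lemma pos_ge0 r : 0 <= pos r.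
Proof. rewrite /pos maxEle; case: (leP r 0) => h; lra. Qed.

Lemma epos (T : Type) (f : T -> R) x : (fun y => (f y)%:E)^\+%E x = (pos (f x))%:E.
Proof. by rewrite funeposE EFin_max. Qed.

Lemma eneg (T : Type) (f : T -> R) x : (fun y => (f y)%:E)^\-%E x = (pos (- f x))%:E.
Proof. by rewrite funenegE EFin_max. Qed.

Lemma ecase (x1 x2 y1 y2 : \bar R) : (0 <= x1)%E -> (0 <= x2)%E -> (0 <= y1)%E -> (0 <= y2)%E ->
  ((x1 - x2) - (y1 - y2) = 0)%E -> exists a b c d : R,
   [/\ x1 = a%:E, x2 = b%:E, y1 = c%:E, y2 = d%:E & a - b = c - d].
Proof.
case: x1 => [a||]; case: x2 => [b||]; case: y1 => [c||]; case: y2 => [d||] //= ? ? ? ? H.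
by exists a, b, c, d; split => //; move: H; rewrite -!EFinD => -[]; lra.
Qed.

Lemma E_le (T : choiceType) (D : set T) (P Q : T -> R) :
  (forall y, D y -> P y <= Q y) ->
  (\esum_(y in D) (P y)%:E <= \esum_(y in D) (Q y)%:E)%E.
Proof. by move=> h; apply: le_esum => y Dy; rewrite lee_fin h. Qed.

Lemma E_add (T : choiceType) (D : set T) (P Q : T -> R) :
  (forall y, D y -> 0 <= P y) -> (forall y, D y -> 0 <= Q y) ->
  (\esum_(y in D) (P y + Q y)%:E = \esum_(y in D) (P y)%:E + \esum_(y in D) (Q y)%:E)%E.
Proof.
move=> hP hQ; rewrite -esumD; last 2 first.
- by move=> y Dy; rewrite lee_fin hP.
- by move=> y Dy; rewrite lee_fin hQ.
by apply: eq_esum => y _; rewrite EFinD.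
Qed.

Lemma E_ge1 (T : choiceType) (D : set T) (P : T -> \bar R) y0 :
  D y0 -> (0 <= P y0)%E -> (P y0 <= \esum_(y in D) P y)%E.
Proof.
move=> Dy0 h; apply: esum_ge; exists [set y0].
  by split; [exact: finite_set1 | move=> y ->].
by rewrite fsbig_set1.
Qed.

Lemma ssumE (T : choiceType) (D : set T) (f : T -> R) :
  ssum D (fun y => (f y)%:E) =
  (\esum_(y in D) (pos (f y))%:E - \esum_(y in D) (pos (- f y))%:E)%E.
Proof.
rewrite /ssum; congr (_ - _)%E; apply: eq_esum => y _.
  exact: epos.
exact: eneg.
Qed.

Lemma ln_key (x y : R) : 0 < x -> 0 < y -> x != y -> 0 < (x - y) * ln (x / y).
Proof.
move=> x0 y0 xy; have [h|h] := ltP x y.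
  have l : ln (x / y) < 0.
    apply: ln_lt0; rewrite divr_gt0 //= ltr_pdivrMr // mul1r //.
  nra.
have h' : y < x by rewrite lt_neqAle h eq_sym xy.
have l : 0 < ln (x / y) by apply: ln_gt0; rewrite ltr_pdivlMr // mul1r.
nra.
Qed.

Lemma ln_key2 (x y : R) : 0 < x -> 0 < y -> - (x * ln (x / y)) < y.
Proof.
move=> x0 y0.
have e : ln (x / y) = - ln (y / x).
  by rewrite -invf_div lnV // posrE divr_gt0.
have := ln_sublinear (divr_gt0 y0 x0).
rewrite e mulrN opprK => h.
have : x * ln (y / x) < x * (y / x) by rewrite ltr_pM2l.
by rewrite mulrCA divff ?mulr1 // gt_eqF.
Qed.
End H.
Arguments pos {R}.
Arguments posE {R}.

Lemma expect0 (R : realType) (S : finType) (p : seq S -> R) :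
  expect p (fun _ => 0) = 0%E.
Proof.
rewrite /expect ssumE !esum1 ?subee // => y _; rewrite mulr0 /pos ?oppr0 maxxx //.
Qed.

Theorem proposition4 (R : realType) (S : finType) (p q : seq S -> R) :
  (0 < #|S|)%N ->
  language_model p -> language_model q ->
  (KL p q < +oo)%E ->
  (forall y, p y = 0 -> q y = 0) ->
  cov p (fun y => ln (p y / q y)) (fun y => q y / p y) = 0%E <-> p = q.
Proof.
move=> _ [p0 p1] [q0 q1] hKL hpq.
set D := [set y | 0 < p y].
have Dn : forall y, ~ D y -> p y = 0.
  by move=> y; rewrite /D /= lt_neqAle p0 andbT => /negP; rewrite negbK eq_sym => /eqP.
have Dn' : forall y, y \notin D -> p y = 0.
  by move=> y; rewrite notin_setE => /Dn.
have Eg : expect p (fun y => q y / p y) = 1%E.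
  rewrite /expect ssumE [X in (_ - X)%E]esum1; last first.
    move=> y Dy; rewrite /pos maxEle; case: leP => h //.
    exfalso; have := q0 y; move: h; rewrite /D /= in Dy.
    by rewrite mulrCA divff ?mulr1 ?gt_eqF //; lra.
  rewrite sube0 -q1 esum_mkcond; apply: eq_esum => y _.
  case: (boolP (y \in D)) => h.
    move: h; rewrite inE /D /= => h.
    congr EFin; rewrite mulrCA divff ?mulr1 ?gt_eqF // /pos maxEle; case: leP => h2 //; have := q0 y; lra.
  by rewrite hpq // Dn'.
split; last first.
  move=> <-.
  rewrite /cov.
  have hl : forall y, ln (p y / p y) = 0.
    move=> y; have [->|h] := eqVneq (p y) 0; first by rewrite mul0r ln0.
    by rewrite divff // ln1.
  have -> : (fun y => ln (p y / p y) * (p y / p y)) = fun _ => 0.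
    by apply/funext => y; rewrite hl mul0r.
  have -> : (fun y => ln (p y / p y)) = fun _ => 0 by apply/funext => y; rewrite hl.
  by rewrite !expect0 mul0e subee.
move=> hc.
have qpos : forall y, D y -> 0 < q y.
  move=> y0 Dy0; rewrite lt_neqAle q0 andbT eq_sym; apply/negP => /eqP qy0.
  move: hKL; rewrite /KL /ssum.
  have hP : (\esum_(i in [set: seq S]) (kl_term p q)^\+ i)%E = +oo%E.
    apply/eqP; rewrite eq_le leey /=.
    have <- : ((kl_term p q)^\+ y0 = +oo)%E.
      by rewrite funeposE /kl_term qy0 eqxx gt_eqF.
    by apply: E_ge1 => //; rewrite funeposE /kl_term qy0 eqxx gt_eqF.
  have hN : (\esum_(i in [set: seq S]) (kl_term p q)^\- i <= 1)%E.
    rewrite -q1; apply: le_esum => y _; rewrite funenegE /kl_term.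
    case: eqP => hp; first by rewrite oppe0 maxxx lee_fin q0.
    case: eqP => hq.
      by rewrite ge_max leNye lee_fin q0.
    rewrite ge_max; apply/andP; split; last exact: q0.
    rewrite -EFinN lee_fin.
    apply: ltW; apply: ln_key2; last by rewrite lt_neqAle q0 andbT eq_sym; apply/eqP.
    by rewrite lt_neqAle p0 andbT eq_sym; apply/eqP.
  have hN0 : (0 <= \esum_(i in [set: seq S]) (kl_term p q)^\- i)%E.
    by apply: esum_ge0 => y _; apply: funeneg_ge0.
  by rewrite hP; move: hN hN0; case: (\esum_(i in _) _)%E => [r||] //=.
apply/funext => y0; case: (eqVneq (p y0) (q y0)) => // hne; exfalso.
have Dy0 : D y0.
  rewrite /D /= lt_neqAle p0 andbT eq_sym; apply/negP => /eqP h0.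
  by move: hne; rewrite h0 hpq ?eqxx.
rewrite /cov Eg mule1 /expect !ssumE in hc.
have ge0E : forall (f : seq S -> R), (0 <= \esum_(y in D) (pos (f y))%:E)%E.
  by move=> f; apply: esum_ge0 => y _; rewrite lee_fin pos_ge0.
pose a := fun y => p y * (ln (p y / q y) * (q y / p y)).
pose b := fun y => p y * ln (p y / q y).
have [Ap [An [Bp [Bn [eAp eAn eBp eBn hAB]]]]] :=
  @ecase R _ _ _ _ (ge0E a) (ge0E (fun y => - a y)) (ge0E b) (ge0E (fun y => - b y)) hc.
have hab : forall y, D y -> b y - a y = (p y - q y) * ln (p y / q y).
  move=> y Dy; rewrite /a /b; field.
  by rewrite gt_eqF.
have hw0 : forall y, D y -> 0 <= b y - a y.
  move=> y Dy; rewrite hab //; case: (eqVneq (p y) (q y)) => [->|ne].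
    by rewrite subrr mul0r.
  by apply: ltW; apply: ln_key => //; apply: qpos.
have hw1 : 0 < b y0 - a y0 by rewrite hab //; apply: ln_key => //; apply: qpos.
have Eu : (\esum_(y in D) (pos (a y) + pos (- b y))%:E = (Ap + Bn)%:E)%E.
  by rewrite E_add ?eAp ?eBn // => y _; apply: pos_ge0.
have Ev : (\esum_(y in D) (pos (b y) + pos (- a y))%:E = (Ap + Bn)%:E)%E.
  rewrite E_add ?eBp ?eAn; last 2 first.
  - by move=> y _; apply: pos_ge0.
  - by move=> y _; apply: pos_ge0.
  by congr EFin; lra.
have Ev' : (\esum_(y in D) (pos (b y) + pos (- a y))%:E =
    \esum_(y in D) (pos (a y) + pos (- b y))%:E + \esum_(y in D) (b y - a y)%:E)%E.
  rewrite -E_add; last 2 first.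
  - by move=> y _; apply: addr_ge0; apply: pos_ge0.
  - exact: hw0.
  apply: eq_esum => y _; congr EFin.
  have := posE (a y); have := posE (b y); lra.
have hW : ((b y0 - a y0)%:E <= \esum_(y in D) (b y - a y)%:E)%E.
  by apply: E_ge1 => //; rewrite lee_fin hw0.
move: Ev'; rewrite Ev Eu; move: hW.
case: (\esum_(y in D) _)%E => [r||] //=.
rewrite lee_fin => h1 /eqP; rewrite -EFinD eqe => /eqP h2.
have r0 : r = 0 by apply: (addrI (Ap + Bn)); rewrite addr0 -h2.
by move: (lt_le_trans hw1 h1); rewrite r0 ltxx.
Qed.
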